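(* Let $R$ be a representation of $\mathbf{Q}$ with dimension vector $(1,4,1)$ that is globally injective and globally surjective (i.e. $R$ gives a point of $\mathcal{I}(1)$). Then the dimension vectors of the nonzero proper subrepresentations of $R$ are exactly $(0,b,1)$ for $b\in\{0,1,2,3,4\}$.
   Context: The quiver $\mathbf{Q}$ has vertices $-1,0,1$, arrows $\eta_0,\dots,\eta_3:-1\to0$, $\phi_0,\dots,\phi_3:0\to1$ and relations $\phi_i\eta_j+\phi_j\eta_i=0$; a representation consists of vector spaces $V_{-1},V_0,V_1$ and linear maps $f_i:V_{-1}\to V_0$, $g_i:V_0\to V_1$ with $g_if_j+g_jf_i=0$. $R$ is globally injective (resp. surjective) if $\sum\lambda_if_i$ is injective (resp. $\sum\lambda_ig_i$ surjective) for all $\lambda\in\mathbb{C}^4\setminus\{0\}$. $\mathcal{I}(1)$ denotes the set of classes of such globally injective and globally surjective representations of dimension vector $(1,4,1)$, which correspond to locally free rank 2 instanton sheaves of charge 1 on $\mathbb{P}^3$. *)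

(* Defs.v *)
(* Quiver representations of Q with arbitrary dimension
   vector (a, b, c) over a field K, with ROW-VECTOR convention:
   a linear map V -> W is a matrix M : 'M_(dim V, dim W), acting as v |-> v *m M.
   So f i : 'M_(a,b) represents f_i : V_{-1} -> V_0 and g i : 'M_(b,c)
   represents g_i : V_0 -> V_1; the composite g_i o f_j is f j *m g i. *)
From HB Require Import structures.
From mathcomp Require Import all_boot all_order all_algebra.
From mathcomp Require Import reals complex.
Set Implicit Arguments. Unset Strict Implicit. Unset Printing Implicit Defensive.
Import GRing.Theory.
Local Open Scope ring_scope.

(* Relations  phi_i eta_j + phi_j eta_i = 0, i.e. g_i f_j + g_j f_i = 0. *)
Definition Q_relations (K : fieldType) (a b c : nat)
  (f : 'I_4 -> 'M[K]_(a, b)) (g : 'I_4 -> 'M[K]_(b, c)) : Prop :=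
  forall i j : 'I_4, f j *m g i + f i *m g j = 0.

Definition globally_injective (K : fieldType) (a b : nat)
  (f : 'I_4 -> 'M[K]_(a, b)) : Prop :=
  forall lam : 'rV[K]_4, lam != 0 -> row_free (\sum_(i < 4) lam 0 i *: f i)%R.

Definition globally_surjective (K : fieldType) (b c : nat)
  (g : 'I_4 -> 'M[K]_(b, c)) : Prop :=
  forall lam : 'rV[K]_4, lam != 0 -> row_full (\sum_(i < 4) lam 0 i *: g i)%R.

Definition is_subrep (K : fieldType) (a b c : nat)
  (f : 'I_4 -> 'M[K]_(a, b)) (g : 'I_4 -> 'M[K]_(b, c))
  (U1 : 'M[K]_a) (U2 : 'M[K]_b) (U3 : 'M[K]_c) : Prop :=
  forall i : 'I_4, (U1 *m f i <= U2)%MS /\ (U2 *m g i <= U3)%MS.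

Definition subrep_dim (K : fieldType) (a b c : nat)
  (U1 : 'M[K]_a) (U2 : 'M[K]_b) (U3 : 'M[K]_c) : nat * nat * nat :=
  (\rank U1, \rank U2, \rank U3)%N.

(* Main.v *)
Require Import Defs.
From HB Require Import structures.
From mathcomp Require Import all_boot all_order all_algebra.
From mathcomp Require Import reals complex.
Local Open Scope ring_scope.
Import GRing.Theory.

Lemma indep_unit (K : fieldType) (M : 'M[K]_4) :
  (forall lam : 'rV_4, lam != 0 -> lam *m M != 0) -> M \in unitmx.
Proof.
move=> H; rewrite unitmxE unitfE; apply/det0P => -[v v0 vM].
by move: (H v v0); rewrite vM eqxx.
Qed.

Lemma rank4 (K : fieldType) (M : 'M[K]_4) : M \in unitmx -> \rank M = 4%N.
Proof. by rewrite -row_free_unit => /eqP. Qed.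

Lemma mainGen (K : fieldType)
  (f : 'I_4 -> 'M[K]_(1, 4)) (g : 'I_4 -> 'M[K]_(4, 1)) :
  globally_injective f -> globally_surjective g ->
  forall d : nat * nat * nat,
    (exists (U1 : 'M[K]_1) (U2 : 'M[K]_4) (U3 : 'M[K]_1),
        [/\ is_subrep f g U1 U2 U3,
            subrep_dim U1 U2 U3 = d,
            d <> (0, 0, 0)%N & d <> (1, 4, 1)%N])
    <-> (exists b : nat, (b <= 4)%N /\ d = (0, b, 1)%N).
Proof.
move=> gi gs d; split; last first.
  move=> [b [hb ->]]; exists 0, (pid_mx b), 1%:M; split => //.
  - by move=> i; rewrite mul0mx sub0mx; split => //; apply: submx1.
  - by rewrite /subrep_dim mxrank0 mxrank1 rank_pid_mx.
pose F : 'M[K]_4 := \matrix_(i, j) f i 0 j.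
pose H : 'M[K]_4 := \matrix_(i, j) g i j 0.
have Fu : F \in unitmx.
  apply: indep_unit => lam l0; move: (gi lam l0); apply: contraL => /eqP E.
  have -> : \sum_(i < 4) lam 0 i *: f i = 0.
    apply/matrixP => a b; rewrite !ord1 -[RHS](congr1 (fun M : 'M[K]_(1,4) => M 0 b) E) summxE !mxE.
    by apply: eq_bigr => i _; rewrite !mxE.
  by rewrite /row_free mxrank0.
have Hu : H \in unitmx.
  apply: indep_unit => lam l0; move: (gs lam l0); apply: contraL => /eqP E.
  have -> : \sum_(i < 4) lam 0 i *: g i = 0.
    apply/matrixP => a b; rewrite !ord1 summxE [RHS]mxE.
    transitivity ((lam *m H) 0 a); last by rewrite E mxE.
    rewrite mxE.
    by apply: eq_bigr => i _; rewrite !mxE.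
  by rewrite /row_full mxrank0.
have gnz i : g i != 0.
  have := gs (delta_mx 0 i); rewrite (bigD1 i) //= big1 ?addr0; last first.
    by move=> j /negbTE ji; rewrite mxE ji andbF scale0r.
  rewrite mxE !eqxx scale1r => /(_ _) h.
  have : row_full (g i).
    by apply: h; apply/eqP => /matrixP /(_ 0 i); rewrite !mxE !eqxx /= => /eqP; rewrite oner_eq0.
  by apply: contraL => /eqP ->; rewrite /row_full mxrank0.
move=> [U1 [U2 [U3 [sub dim d0 d1]]]].
have r1 : (\rank U1 <= 1)%N := rank_leq_row U1.
have r3 : (\rank U3 <= 1)%N := rank_leq_row U3.
have r2 : (\rank U2 <= 4)%N := rank_leq_row U2.
case E1: (\rank U1) => [|k]; last first.
  have E1' : \rank U1 = 1%N by move: r1; rewrite E1; case: k {E1}.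
  have fU2 i : (f i <= U2)%MS.
    apply: submx_trans (proj1 (sub i)).
    by rewrite -{1}(mul1mx (f i)); apply: submxMr; rewrite sub1mx /row_full E1'.
  have U2f : row_full U2.
    rewrite /row_full eqn_leq rank_leq_col -{1}(@rank4 _ F Fu) mxrankS //.
    apply/row_subP => i; apply: submx_trans (fU2 i).
    have -> : row i F = f i by apply/matrixP => a b; rewrite !ord1 !mxE.
    exact: submx_refl.
  have gU3 : (g 0 <= U3)%MS.
    apply: submx_trans (proj2 (sub 0)).
    by rewrite -{1}(mul1mx (g 0)); apply: submxMr; rewrite sub1mx.
  have E3 : \rank U3 = 1%N.
    apply/eqP; rewrite eqn_leq r3 /=; apply: leq_trans (mxrankS gU3).
    by rewrite lt0n mxrank_eq0 gnz.
  by exfalso; apply: d1; rewrite -dim /subrep_dim E1' E3 (eqP U2f).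
case E3: (\rank U3) => [|k]; last first.
  have E3' : \rank U3 = 1%N by move: r3; rewrite E3; case: k {E3}.
  by exists (\rank U2); split => //; rewrite -dim /subrep_dim E1 E3'.
exfalso; apply: d0; rewrite -dim /subrep_dim E1 E3.
move/eqP: E3; rewrite mxrank_eq0 => /eqP U30.
have Z : U2 *m H^T = 0.
  apply/matrixP => a b.
  have := proj2 (sub b); rewrite U30 submx0 => /eqP /matrixP /(_ a 0) E.
  transitivity ((U2 *m g b) a 0); last by rewrite E !mxE.
  rewrite !mxE; by apply: eq_bigr => j _; rewrite !mxE.
have : U2 = 0.
  have Hu' : H^T \in unitmx by rewrite unitmx_tr.
  have := congr1 (mulmx^~ (invmx H^T)) Z => /=.
  by rewrite mulmxK // mul0mx.
by move ->; rewrite mxrank0.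
Qed.

Theorem mainTheorem10 (R : realType)
  (f : 'I_4 -> 'M[R[i]]_(1, 4)) (g : 'I_4 -> 'M[R[i]]_(4, 1)) :
  Q_relations f g -> globally_injective f -> globally_surjective g ->
  forall d : nat * nat * nat,
    (exists (U1 : 'M[R[i]]_1) (U2 : 'M[R[i]]_4) (U3 : 'M[R[i]]_1),
        [/\ is_subrep f g U1 U2 U3,
            subrep_dim U1 U2 U3 = d,
            d <> (0, 0, 0)%N & d <> (1, 4, 1)%N])
    <-> (exists b : nat, (b <= 4)%N /\ d = (0, b, 1)%N).
Proof. move=> _; exact: (@mainGen (R[i] : fieldType) f g). Qed.
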